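(* Let $(A,R)$, $(B,S)$ be uniform preorders, $f:(A,R)\to(B,S)$ a monotone map, and $g:B\to A$ a function. The following are equivalent: (i) $g$ is a monotone map $(B,S)\to(A,R)$ and is right adjoint to $f$ in $\mathsf{UOrd}$ (i.e. $\mathrm{id}_A\le g\circ f$ and $f\circ g\le \mathrm{id}_B$); (ii) (1) the relation $\{(f(g(b)),b)\mid b\in B\}$ is in $S$, and (2) for all $s\in S$ the relation $s^*=\{(a,gb)\mid (fa,b)\in s\}$ is in $R$. Moreover, if $S_0\subseteq S$ is a basis of $S$, then it suffices to verify condition (2) for $s\in S_0$.
   Context: A uniform preorder is a pair $(A,R)$ with $A$ a set and $R\subseteq P(A\times A)$ such that $\mathrm{id}_A\in R$, $s\circ r\in R$ whenever $r,s\in R$, and $s\in R$ whenever $r\in R$ and $s\subseteq r$. A monotone map $f:(A,R)\to(B,S)$ is a function $f:A\to B$ with $\{(fa,fa')\mid (a,a')\in r\}\in S$ for all $r\in R$; for monotone $f,g:(A,R)\to(B,S)$ one sets $f\le g$ iff $\{(fa,ga)\mid a\in A\}\in S$. This defines the locally ordered category $\mathsf{UOrd}$. A basis of $(B,S)$ is a subset $S_0\subseteq S$ such that every $s\in S$ is contained in some $s_0\in S_0$. *)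

(* Defs.v *)
Definition relation (A : Type) := A -> A -> Prop.

Definition id_rel {A : Type} : relation A := fun a a' => a = a'.

(* s o r : first r, then s *)
Definition comp_rel {A : Type} (s r : relation A) : relation A :=
  fun a c => exists b, r a b /\ s b c.

Definition subrel {A : Type} (s r : relation A) : Prop :=
  forall a a', s a a' -> r a a'.

Definition uniform_preorder {A : Type} (R : relation A -> Prop) : Prop :=
  R id_rel /\
  (forall r s, R r -> R s -> R (comp_rel s r)) /\
  (forall r s, R r -> subrel s r -> R s).

Definition img_rel {A B : Type} (f : A -> B) (r : relation A) : relation B :=
  fun b b' => exists a a', r a a' /\ f a = b /\ f a' = b'.

Definition monotone {A B : Type} (R : relation A -> Prop) (S : relation B -> Prop)
  (f : A -> B) : Prop :=
  forall r, R r -> S (img_rel f r).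

Definition le_map {A B : Type} (S : relation B -> Prop) (f g : A -> B) : Prop :=
  S (fun b b' => exists a, f a = b /\ g a = b').

Definition is_basis {B : Type} (S S0 : relation B -> Prop) : Prop :=
  (forall s, S0 s -> S s) /\
  (forall s, S s -> exists s0, S0 s0 /\ subrel s s0).

Definition star_rel {A B : Type} (f : A -> B) (g : B -> A) (s : relation B)
  : relation A :=
  fun a a' => exists a0 b, s (f a0) b /\ a = a0 /\ a' = g b.

(* Main.v *)
Require Import Defs.

Theorem lemma2p1 (A B : Type) (R : relation A -> Prop) (S : relation B -> Prop)
  (f : A -> B) (g : B -> A) :
  uniform_preorder R -> uniform_preorder S -> monotone R S f ->
  ((monotone S R g /\ le_map R (fun a => a) (fun a => g (f a))
                   /\ le_map S (fun b => f (g b)) (fun b => b))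
   <->
   (S (fun b b' => exists b0, f (g b0) = b /\ b0 = b') /\
    (forall s, S s -> R (star_rel f g s))))
  /\
  (forall S0 : relation B -> Prop, is_basis S S0 ->
     ((S (fun b b' => exists b0, f (g b0) = b /\ b0 = b') /\
       (forall s, S s -> R (star_rel f g s)))
      <->
      (S (fun b b' => exists b0, f (g b0) = b /\ b0 = b') /\
       (forall s, S0 s -> R (star_rel f g s))))).
Proof.
  intros [Rid [Rcomp Rdown]] [Sid [Scomp Sdown]] Hf.
  split.
  - split.
    + intros [Hg [Hu Hc]]. split; [exact Hc|].
      intros s Hs.
      apply Rdown with (r := comp_rel (img_rel g s) (fun b b' => exists a, a = b /\ g (f a) = b')).
      * apply Rcomp; [exact Hu | exact (Hg s Hs)].
      * intros a a' [a0 [b [H1 [-> ->]]]].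
        exists (g (f a0)). split; [exists a0; auto|].
        exists (f a0), b. auto.
    + intros [Hc Hst]. split; [|split; [|exact Hc]].
      * intros s Hs.
        pose (c := fun b b' => exists b0, f (g b0) = b /\ b0 = b').
        apply Rdown with (r := star_rel f g (comp_rel s c)).
        -- apply Hst, Scomp; [exact Hc | exact Hs].
        -- intros a a' [b1 [b2 [H [<- <-]]]].
           exists (g b1), b2. split; [|auto].
           exists b1. split; [exists b1; auto | exact H].
      * apply Rdown with (r := star_rel f g id_rel).
        -- apply Hst, Sid.
        -- intros a a' [a0 [<- <-]]. exists a0, (f a0). repeat split; reflexivity.
  - intros S0 [HS0 Hbas]. split.
    + intros [Hc Hst]. split; [exact Hc|]. intros s Hs. apply Hst, HS0, Hs.
    + intros [Hc Hst]. split; [exact Hc|]. intros s Hs.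
      destruct (Hbas s Hs) as [s0 [Hs0 Hsub]].
      apply Rdown with (r := star_rel f g s0); [apply Hst, Hs0|].
      intros a a' [a0 [b [H [-> ->]]]]. exists a0, b. auto.
Qed.
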